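(* Let $\mathbb{G}$ be a linear array whose difference coarray is hole-free, and let $\mathbb{F}_r$ be the fractal array generated by $\mathbb{G}$. Denote by $F_{\mathbb{G}}$ and $F_r$ the fragilities of $\mathbb{G}$ and $\mathbb{F}_r$. Then $F_r\le F_{\mathbb{G}}$ for all $r\ge1$.
   Context: A linear array is a finite set $\mathbb{G}\subset\mathbb{Z}$ with $\min\mathbb{G}=0$; its difference coarray is $\mathbb{D}=\{n_1-n_2:n_1,n_2\in\mathbb{G}\}$; its central ULA $\mathbb{U}$ is the largest set $\{-m,\dots,m\}$ contained in $\mathbb{D}$; $\mathbb{D}$ is hole-free if $\mathbb{D}=\mathbb{U}$. The fractal array generated by $\mathbb{G}$ (with $M=|\mathbb{U}|$) is $\mathbb{F}_0=\{0\}$, $\mathbb{F}_{r+1}=\bigcup_{n\in\mathbb{G}}(\mathbb{F}_r+nM^r)$ where $A+t=\{a+t:a\in A\}$. For an array $\mathbb{A}$ with difference coarray $\mathbb{D}_{\mathbb{A}}$, a sensor $n\in\mathbb{A}$ is essential if the difference coarray of $\mathbb{A}\setminus\{n\}$ differs from $\mathbb{D}_{\mathbb{A}}$. The fragility of $\mathbb{A}$ is $F_{\mathbb{A}}=|\mathbb{E}|/|\mathbb{A}|$ where $\mathbb{E}$ is the set of essential sensors of $\mathbb{A}$. *)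

(* Defs.v *)
(* Arrays are finite sets of integers, represented by
   sequences of [int] (duplicates irrelevant; cardinality = size of undup). *)
From HB Require Import structures.
From mathcomp Require Import all_boot all_order all_algebra.
Set Implicit Arguments. Unset Strict Implicit. Unset Printing Implicit Defensive.
Import Order.TTheory GRing.Theory Num.Theory.
Local Open Scope ring_scope.

Definition seteq (A B : seq int) : bool := all (mem B) A && all (mem A) B.

Definition linear_array (G : seq int) : bool :=
  (0 \in G) && all (fun n => 0 <= n) G.

Definition coarray (A : seq int) : seq int := [seq a - b | a <- A, b <- A].

Definition ULA (m : nat) : seq int := [seq i%:Z - m%:Z | i <- iota 0 (2 * m).+1].

(* half-width m of the central ULA of A: largest m with {-m..m} contained in D
   (candidates m <= size D suffice since {-m..m} has 2m+1 distinct elements) *)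
Definition ula_m (A : seq int) : nat :=
  (\max_(k <- iota 0 (size (coarray A)).+1 | all (mem (coarray A)) (ULA k)) k)%N.

Definition central_ULA (A : seq int) : seq int := ULA (ula_m A).
Definition ula_size (A : seq int) : nat := size (undup (central_ULA A)).

Definition hole_free (A : seq int) : bool := seteq (coarray A) (central_ULA A).

Fixpoint fractal (G : seq int) (r : nat) : seq int :=
  match r with
  | 0%N => [:: 0]
  | r'.+1 => flatten [seq [seq a + n * ((ula_size G) ^ r')%N%:Z | a <- fractal G r'] | n <- G]
  end.

Definition essential (A : seq int) (n : int) : bool :=
  (n \in A) && ~~ seteq (coarray [seq x <- A | x != n]) (coarray A).

Definition essential_set (A : seq int) : seq int :=
  [seq n <- undup A | essential A n].

Definition fragility (A : seq int) : rat :=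
  (size (essential_set A))%:R / (size (undup A))%:R.

(* Main.v *)
Require Import Defs.
From HB Require Import structures.
From mathcomp Require Import all_boot all_order all_algebra.
From mathcomp Require Import zify ring.
Import Order.TTheory GRing.Theory Num.Theory.
Local Open Scope ring_scope.

Lemma fractalS G r : fractal G r.+1 =
  [seq a + n * ((ula_size G) ^ r)%N%:Z | n <- G, a <- fractal G r].
Proof. by []. Qed.

Lemma ULA_uniq m : uniq (ULA m).
Proof. rewrite map_inj_uniq ?iota_uniq // => i j H; lia. Qed.

Lemma G_bound G : linear_array G -> hole_free G ->
  forall g, g \in G -> 0 <= g /\ g < (ula_size G)%:Z.
Proof.
move=> /andP[G0 Gpos] /andP[Hc _] g gG.
split; first by move/allP: Gpos => /(_ g gG).
have : g - 0 \in coarray G by apply/allpairsP; exists (g, 0).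
move/allP: Hc => Hc /Hc /=.
rewrite /ula_size /central_ULA undup_id ?ULA_uniq // size_map size_iota.
move/mapP => [i]; rewrite mem_iota => /andP[_ Hi] E. lia.
Qed.

Lemma fractal_bound G : linear_array G -> hole_free G ->
  forall r a, a \in fractal G r -> 0 <= a /\ a < ((ula_size G)^r)%N%:Z.
Proof.
move=> HG Hh; elim=> [|r IH] a.
  by rewrite /= inE => /eqP ->.
rewrite fractalS => /allpairsP[[n b] /= [nG bF ->]].
have [n0 nM] := G_bound G HG Hh n nG. have [b0 bN] := IH b bF.
rewrite expnS PoszM. nia.
Qed.

Lemma uniq_dec (N a a' n n' : int) : 0 <= a < N -> 0 <= a' < N ->
  a + n * N = a' + n' * N -> a = a' /\ n = n'.
Proof.
move=> H1 H2 E.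
have Hk : (n - n') * N = a' - a by rewrite mulrBl; lia.
have : n - n' = 0.
  case: (ltrgtP (n - n') 0) => // hk.
  - have : (n - n') <= -1 by lia.
    move: (n - n') Hk => k Hk hk'. nia.
  - have : 1 <= (n - n') by lia.
    move: (n - n') Hk => k Hk hk'. nia.
move=> h0; rewrite h0 mul0r in Hk; lia.
Qed.

Lemma fractal0 G r : linear_array G -> 0 \in fractal G r.
Proof.
case/andP=> G0 _; elim: r => [|r IH]; first by rewrite inE.
rewrite fractalS; apply/allpairsP; exists (0, 0) => /=; split => //.
Qed.

Theorem theorem6 (G : seq int) :
  linear_array G -> hole_free G ->
  forall r : nat, (1 <= r)%N -> fragility (fractal G r) <= fragility G.
Proof.
move=> HG Hh [//|r] _.
set N := ((ula_size G) ^ r)%N%:Z.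
set A := fractal G r.
have Ab := fractal_bound G HG Hh r.
have injF : forall n n' a a', a \in A -> a' \in A ->
    a + n * N = a' + n' * N -> a = a' /\ n = n'.
  move=> n n' a a' aA a'A E; apply: uniq_dec E.
  - by have [] := Ab a aA => -> ->.
  - by have [] := Ab a' a'A => -> ->.
have memF : forall y, reflect (exists n a, [/\ n \in G, a \in A & y = a + n * N])
    (y \in fractal G r.+1).
  move=> y; rewrite fractalS; apply: (iffP allpairsP).
    by case=> [[n a] /= [nG aA ->]]; exists n, a.
  by case=> n [a [nG aA ->]]; exists (n, a).
have sizeF : size (undup (fractal G r.+1)) = (size (undup G) * size (undup A))%N.
  rewrite -(size_allpairs (fun n a => a + n * N)).
  apply: perm_size; apply: uniq_perm; first exact: undup_uniq.
  - apply: allpairs_uniq; rewrite ?undup_uniq //.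
    move=> [n a] [n' a'] /allpairsP[[n1 a1] /= [_ Ha [-> ->]]]
      /allpairsP[[n2 a2] /= [_ Ha' [-> ->]]] /= E.
    rewrite mem_undup in Ha; rewrite mem_undup in Ha'.
    by have [-> ->] := injF _ _ _ _ Ha Ha' E.
  - move=> y; rewrite mem_undup; apply/memF/allpairsP.
      by case=> n [a [nG aA ->]]; exists (n, a); rewrite !mem_undup.
    case=> [[n a] /= [nG aA ->]]; exists n, a.
    by rewrite mem_undup in nG; rewrite mem_undup in aA.
have sizeE : (size (essential_set (fractal G r.+1)) <=
    size (essential_set G) * size (undup A))%N.
  rewrite -(size_allpairs (fun n a => a + n * N)).
  apply: uniq_leq_size; first by rewrite filter_uniq // undup_uniq.
  move=> x; rewrite mem_filter => /andP[Hess _].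
  case/andP: Hess => xF Hness.
  have [n [a [nG aA Ex]]] := memF x xF.
  apply/allpairsP; exists (n, a); split => //=; last by rewrite mem_undup.
  rewrite mem_filter mem_undup nG andbT /essential nG /=.
  apply/negP => /andP[_ Hs]; apply: (negP Hness).
  apply/andP; split.
    apply/allP => d /allpairsP[[p q] /= [pIn qIn ->]].
    rewrite mem_filter in pIn; rewrite mem_filter in qIn.
    case/andP: pIn => _ pF; case/andP: qIn => _ qF.
    by apply/allpairsP; exists (p, q).
  apply/allP => d /allpairsP[[p q] /= [pF qF ->]].
  have [g1 [a1 [g1G a1A ->]]] := memF p pF.
  have [g2 [a2 [g2G a2A ->]]] := memF q qF.
  have : g1 - g2 \in coarray G by apply/allpairsP; exists (g1, g2).
  move/allP: Hs => Hs /Hs /= /allpairsP[[h1 h2] /= [h1I h2I Eh]].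
  rewrite mem_filter in h1I; rewrite mem_filter in h2I.
  case/andP: h1I => h1n h1G; case/andP: h2I => h2n h2G.
  apply/allpairsP; exists (a1 + h1 * N, a2 + h2 * N) => /=; split.
  - rewrite mem_filter; apply/andP; split.
      apply/eqP => E; rewrite Ex in E.
      by have [_ E'] := injF _ _ _ _ a1A aA E; rewrite E' eqxx in h1n.
    by apply/memF; exists h1, a1.
  - rewrite mem_filter; apply/andP; split.
      apply/eqP => E; rewrite Ex in E.
      by have [_ E'] := injF _ _ _ _ a2A aA E; rewrite E' eqxx in h2n.
    by apply/memF; exists h2, a2.
  - have : g1 * N - g2 * N = h1 * N - h2 * N by rewrite -!mulrBl Eh.
    move: (g1 * N) (g2 * N) (h1 * N) (h2 * N) => u v w z H; clear -H; lia.
rewrite /fragility sizeF.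
have Apos : (0 < size (undup A))%N.
  have : 0 \in undup A by rewrite mem_undup; apply: fractal0.
  by case: (undup A).
have Gpos : (0 < size (undup G))%N.
  case/andP: HG => G0 _.
  have : 0 \in undup G by rewrite mem_undup.
  by case: (undup G).
rewrite ler_pdivrMr ?ltr0n ?muln_gt0 ?Apos ?Gpos //.
rewrite natrM mulrA divfK ?pnatr_eq0 -?lt0n // -natrM ler_nat.
exact: sizeE.
Qed.
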